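(* Losanitsch's triangle $(L(n,k))_{n,k\ge0}$ has the property that for each $k\ge 0$ its $k$-th column $(L(n,k))_{n\ge0}$ equals either $(e(n,k))_{n\ge 0}$ or $(o(n,k))_{n\ge0}$, and $L(n,n)=1$ for all $n\ge 0$; moreover it is the unique matrix $(a(n,k))_{n,k\ge0}$ with these two properties.
   Context: $e(n,k)$ (resp. $o(n,k)$) is the number of $k$-element subsets of $\{1,\dots,n\}$ whose sum of elements is even (resp. odd); the empty set counts as even. Losanitsch's triangle $(L(n,k))_{n,k\ge 0}$ is defined by $L(0,k)=[k=0]$, $L(1,k)=[k\le 1]$ for $k\ge0$, $L(n,k)=0$ for $k<0$, and for $n\ge 2$ and all $k$: $L(n,k)=L(n-2,k)+\binom{n-2}{k-1}+L(n-2,k-2)$, where $\binom{m}{j}=0$ for $j<0$ or $j>m$. *)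

(* Defs.v *)
From mathcomp Require Import all_boot.
Set Implicit Arguments. Unset Strict Implicit. Unset Printing Implicit Defensive.

(* Sum of the elements of A, viewing i : 'I_n as the integer i+1 in {1,...,n}. *)
Definition elt_sum (n : nat) (A : {set 'I_n}) : nat := \sum_(i in A) i.+1.

Definition e_cnt (n k : nat) : nat :=
  #|[set A : {set 'I_n} | (#|A| == k) && ~~ odd (elt_sum A)]|.

Definition o_cnt (n k : nat) : nat :=
  #|[set A : {set 'I_n} | (#|A| == k) && odd (elt_sum A)]|.

(* Losanitsch's triangle; L(n, k) = 0 for k < 0 and binom(m, j) = 0 for j < 0
   are encoded by the matches on k. *)
Fixpoint Los (n k : nat) {struct n} : nat :=
  match n with
  | 0 => (k == 0 : nat)
  | 1 => (k <= 1 : nat)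
  | m.+2 => Los m k
            + (if k is k'.+1 then 'C(m, k') else 0)
            + (if k is k'.+2 then Los m k' else 0)
  end.

(* Main.v *)
Require Import Defs.
From mathcomp Require Import all_boot.
Set Implicit Arguments. Unset Strict Implicit. Unset Printing Implicit Defensive.

Definition cnt n k (p : bool) : nat :=
  \sum_(B : {set 'I_n}) ((#|B| == k) && (odd (elt_sum B) == p) : nat).

Lemma card_sum (T : finType) (P : pred T) : #|[set x | P x]| = \sum_x (P x : nat).
Proof.
rewrite -sum1_card big_mkcond /=; apply: eq_bigr => x _; rewrite inE; by case: (P x).
Qed.

Section Ext.
Variable n : nat.
Definition wd (i : 'I_n) : 'I_n.+1 := widen_ord (leqnSn n) i.
Lemma wd_inj : injective wd.
Proof. by move=> i j /(congr1 val) /= /val_inj. Qed.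
Definition ext (x : {set 'I_n} * bool) : {set 'I_n.+1} :=
  (if x.2 then [set ord_max] else set0) :|: wd @: x.1.
Definition res (A : {set 'I_n.+1}) : {set 'I_n} * bool :=
  ([set i | wd i \in A], ord_max \in A).
Lemma max_notin (B : {set 'I_n}) : ord_max \notin wd @: B.
Proof.
apply/imsetP => -[i _ /(congr1 val) /= h].
by move: (ltn_ord i); rewrite -h ltnn.
Qed.
Lemma ext_res : cancel ext res.
Proof.
move=> [B b]; rewrite /res /ext /=; congr pair.
  apply/setP => i; rewrite !inE mem_imset; last exact: wd_inj.
  have hw : wd i != ord_max by rewrite -val_eqE /= neq_ltn ltn_ord.
  by case: b; rewrite ?inE ?(negbTE hw).
by rewrite in_setU (negbTE (max_notin B)) orbF; case: b; rewrite ?inE ?eqxx.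
Qed.
Lemma res_ext : cancel res ext.
Proof.
move=> A; rewrite /res /ext /=; apply/setP => x.
case: (ltnP x n) => hx.
  have [j ->] : exists j, x = wd j by exists (Ordinal hx); apply: val_inj.
  rewrite in_setU mem_imset; last exact: wd_inj.
  have hw : wd j != ord_max by rewrite -val_eqE /= neq_ltn ltn_ord.
  by rewrite inE; case: ifP => _; rewrite ?inE ?(negbTE hw).
have -> : x = ord_max by apply: val_inj => /=; apply/eqP; rewrite eqn_leq hx -ltnS ltn_ord.
rewrite in_setU (negbTE (max_notin _)) orbF.
by case: ifP => h; rewrite ?inE ?eqxx ?h.
Qed.
Lemma ext_bij : bijective ext.
Proof. exact: (Bijective ext_res res_ext). Qed.

Lemma card_ext B (b : bool) : #|ext (B, b)| = b + #|B|.
Proof.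
rewrite /ext /=; case: b.
  by rewrite cardsU1 max_notin card_imset //; exact: wd_inj.
by rewrite set0U card_imset //; exact: wd_inj.
Qed.

Lemma sum_ext B (b : bool) : elt_sum (ext (B, b)) = b * n.+1 + elt_sum B.
Proof.
rewrite /elt_sum /ext /=.
have H : \sum_(i in wd @: B) i.+1 = \sum_(i in B) i.+1.
  by rewrite big_imset //; move=> i j _ _; exact: wd_inj.
case: b.
  by rewrite big_setU1 ?max_notin //= H mul1n.
by rewrite set0U H.
Qed.
End Ext.

Lemma cntS n k p :
  cnt n.+1 k p = cnt n k p + (if k is k'.+1 then cnt n k' (p (+) odd n.+1) else 0).
Proof.
rewrite /cnt (reindex (@ext n)) /=; last exact: onW_bij (ext_bij n).
rewrite -(pair_big xpredT xpredT (fun (B : {set 'I_n}) (b : bool) => ((#|ext (B, b)| == k) && (odd (elt_sum (ext (B, b))) == p) : nat))) /=.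
rewrite (eq_bigr (fun B : {set 'I_n} => ((#|B|.+1 == k) && (odd (n.+1 + elt_sum B) == p) : nat) +
                            ((#|B| == k) && (odd (elt_sum B) == p) : nat))); last first.
  by move=> B _; rewrite big_bool /= !card_ext !sum_ext mul1n mul0n.
rewrite big_split /= addnC; congr addn.
case: k => [|k]; first by rewrite big1.
apply: eq_bigr => B _; rewrite eqSS oddD.
by case: (odd n); case: (odd (elt_sum B)); case: p.
Qed.

Lemma cnt0 k p : cnt 0 k p = ((k == 0) && ~~ p).
Proof.
rewrite /cnt (big_pred1 set0); last first.
  move=> B /=; apply/esym/eqP/setP => -[i hi]; exfalso; by rewrite ltn0 in hi.
by rewrite cards0 /elt_sum big_set0 eq_sym; case: p; rewrite ?andbT ?andbF.
Qed.

Lemma cnt_comp n k b : cnt n k b + cnt n k (~~ b) = 'C(n, k).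
Proof.
elim: n k b => [|n IH] k b.
  by rewrite !cnt0; case: k => [|k]; case: b.
rewrite !cntS; case: k => [|k].
  by rewrite !addn0 IH !bin0.
rewrite binS -(IH k.+1 b) -(IH k (b (+) odd n.+1)) addNb.
set x := cnt n k.+1 b; set y := cnt n k _; set z := cnt n k.+1 _; set w := cnt n k _.
by rewrite addnACA.
Qed.

Fixpoint tp k := if k is k'.+1 then odd k (+) tp k' else false.

Lemma Los_cnt_aux m : (forall k, Los m k = cnt m k (tp k)) /\ (forall k, Los m.+1 k = cnt m.+1 k (tp k)).
Proof.
elim: m => [|m [IH1 IH2]].
  split=> k; first by rewrite cnt0; case: k.
  by rewrite cntS; case: k => [|[|k]] /=; rewrite !cnt0.
split=> // k.
rewrite [Los _ _]/= IH1 cntS cntS.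
case: k => [|k]; first by rewrite !addn0.
rewrite cntS /= -addnA -addnA; congr addn.
rewrite negbK addnA addbN [cnt m k (~~ _) + _]addnC cnt_comp; congr addn.
case: k => [|k] //=; rewrite IH1; congr cnt.
by case: (odd k); case: (tp k); case: (odd m).
Qed.

Lemma Los_cnt n k : Los n k = cnt n k (tp k).
Proof. by case: (Los_cnt_aux n). Qed.

Lemma Los_aux m : (forall k, m < k -> Los m k = 0) /\ (forall k, m.+1 < k -> Los m.+1 k = 0).
Proof.
elim: m => [|m [IH1 IH2]].
  by split; case=> [|[|k]].
split=> // k hk.
case: k hk => [|[|k]] // hk.
rewrite /= !IH1 ?bin_small //; move: hk; rewrite !ltnS => hk; by [apply: ltnW | apply: ltnW; apply: ltnW].
Qed.

Lemma Los_diag n : Los n n = 1.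
Proof.
suff H : forall n, Los n n = 1 /\ Los n.+1 n.+1 = 1 by case: (H n).
elim=> [|m [IH1 IH2]] //; split=> //.
rewrite /= IH1 bin_small // (proj1 (Los_aux m)) //.
Qed.

Lemma e_cntE n k : e_cnt n k = cnt n k false.
Proof.
rewrite /e_cnt card_sum; apply: eq_bigr => B _; by case: (odd _); rewrite ?andbT ?andbF.
Qed.
Lemma o_cntE n k : o_cnt n k = cnt n k true.
Proof.
rewrite /o_cnt card_sum; apply: eq_bigr => B _; by case: (odd _); rewrite ?andbT ?andbF.
Qed.

Theorem proposition3p1 :
  ((forall k, (forall n, Los n k = e_cnt n k) \/ (forall n, Los n k = o_cnt n k))
   /\ (forall n, Los n n = 1))
  /\
  (forall a : nat -> nat -> nat,
     (forall k, (forall n, a n k = e_cnt n k) \/ (forall n, a n k = o_cnt n k)) ->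
     (forall n, a n n = 1) ->
     forall n k, a n k = Los n k).
Proof.
have L : forall k, (forall n, Los n k = e_cnt n k) \/ (forall n, Los n k = o_cnt n k).
  move=> k; case h: (tp k); [right | left] => n;
    by rewrite Los_cnt h ?e_cntE ?o_cntE.
split; first by split=> //; exact: Los_diag.
move=> a Ha Hd n k.
have C : e_cnt k k + o_cnt k k = 1 by rewrite e_cntE o_cntE (cnt_comp k k false) binn.
case: (Ha k) => Ea; case: (L k) => El; rewrite ?Ea ?El //.
  have := Hd k; rewrite Ea => E1; have := Los_diag k; rewrite El => E2.
  by move: C; rewrite E1 E2.
have := Hd k; rewrite Ea => E1; have := Los_diag k; rewrite El => E2.
by move: C; rewrite E1 E2.
Qed.
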